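(* Let $A$ be a finite set with $|A|\ge3$. The minimal u-closed monoids $M\le A^A$ are exactly the monoids of the form $M_f=\langle f\rangle\cup C$ where $f\in A^A\setminus T$ satisfies one of: (I) $f^2=f$; (II$'$) $f^2$ is a constant and $|A|\ge4$; (III$'$) $f^p=\mathrm{id}_A$ for some prime $p$, and $f$ has at least two fixed points or $f$ has at least two cycles of length $p$. In particular, every minimal u-closed monoid is $C$-minimal.
   Context: $C$ is the set of all constant unary maps on $A$, $T=\{\mathrm{id}_A\}\cup C$, and $\langle f\rangle$ is the submonoid of $A^A$ generated by $f$. A translation of an $n$-ary operation $g$ on $A$ is $x\mapsto g(a_1,\dots,a_{i-1},x,a_{i+1},\dots,a_n)$ with fixed $a_j\in A$; $\mathrm{trl}(g)$ is the set of translations ($\{g\}$ for unary $g$); $N^*:=\{g\mid\mathrm{trl}(g)\subseteq N\}$ for $N\subseteq A^A$. The u-closure $\overline M$ of $M\subseteq A^A$ is the intersection of all monoids $N$ with $M\subseteq N\le A^A$ such that $N^*$ is a clone; $M$ is u-closed if $\overline M=M$. A minimal u-closed monoid is a u-closed monoid $M\le A^A$ with $T\subsetneq M$ such that every u-closed monoid properly contained in $M$ equals $T$. A monoid $M\le A^A$ is $C$-minimal if $T\subsetneq M$ and there is no monoid $N$ with $T\subsetneq N\subsetneq M$. *)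

(* Defs.v *)
From mathcomp Require Import all_boot.
Set Implicit Arguments. Unset Strict Implicit. Unset Printing Implicit Defensive.

Section UClosed.
Variable A : finType.

Definition mset := (A -> A) -> Prop.

Definition subm (M N : mset) : Prop := forall f, M f -> N f.
Definition eqm (M N : mset) : Prop := forall f, M f <-> N f.
Definition psubm (M N : mset) : Prop := subm M N /\ exists f, N f /\ ~ M f.

Definition monoid (M : mset) : Prop :=
  M (fun x => x) /\ forall f g, M f -> M g -> M (f \o g).

Definition Cst : mset := fun f => exists a : A, f = (fun _ => a).
Definition Tset : mset := fun f => f = (fun x => x) \/ Cst f.

(* operations of positive arity n.+1 *)
Definition op (n : nat) := ('I_n.+1 -> A) -> A.

Definition trl n (g : op n) : mset :=
  fun h => exists (i : 'I_n.+1) (a : 'I_n.+1 -> A),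
    h = (fun x => g (fun j => if j == i then x else a j)).

Definition opset := forall n, op n -> Prop.

Definition star (N : mset) : opset := fun n g => subm (trl g) N.

Definition clone (F : opset) : Prop :=
  (forall n (i : 'I_n.+1), F n (fun x => x i)) /\
  (forall n m (f : op n) (gs : 'I_n.+1 -> op m),
     F n f -> (forall i, F m (gs i)) -> F m (fun x => f (fun i => gs i x))).

Definition uclosure (M : mset) : mset :=
  fun f => forall N : mset, monoid N -> subm M N -> clone (star N) -> N f.

Definition u_closed (M : mset) : Prop := eqm (uclosure M) M.

Definition minimal_u_closed (M : mset) : Prop :=
  monoid M /\ u_closed M /\ psubm Tset M /\
  forall N : mset, monoid N -> u_closed N -> psubm N M -> eqm N Tset.

Definition C_minimal (M : mset) : Prop :=
  monoid M /\ psubm Tset M /\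
  ~ exists N : mset, monoid N /\ psubm Tset N /\ psubm N M.

Definition Mf (f : A -> A) : mset :=
  fun g => (exists k : nat, g = iter k f) \/ Cst g.

Definition on_cycle (f : A -> A) (p : nat) (x : A) : Prop :=
  iter p f x = x /\ forall k, 0 < k < p -> iter k f x <> x.

Definition cond_I (f : A -> A) : Prop := f \o f = f.
Definition cond_II' (f : A -> A) : Prop := Cst (f \o f) /\ 4 <= #|A|.
Definition cond_III' (f : A -> A) : Prop :=
  exists p, prime p /\ iter p f = (fun x => x) /\
    ((exists x y, x <> y /\ f x = x /\ f y = y) \/
     (exists x y, on_cycle f p x /\ on_cycle f p y /\
                  forall k, iter k f x <> y)).

End UClosed.

(* Main.v *)
Require Import Defs.
From mathcomp Require Import all_boot zify.
From Stdlib Require Import FunctionalExtensionality Classical.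
Set Implicit Arguments. Unset Strict Implicit. Unset Printing Implicit Defensive.

Section Generic.
Variable A : finType.
Variable a0 : A.

Lemma lift0F n (j : 'I_n) : (lift ord0 j == ord0) = false.
Proof. by apply/negbTE; rewrite eq_sym neq_lift. Qed.

Definition diagP (S : mset A) : Prop :=
  forall K : A -> A -> A, (forall a, S (K a)) -> (forall b, S (fun x => K x b)) ->
    S (fun x => K x x).

Lemma nary_of_diag (S : mset A) : monoid S -> diagP S ->
  forall n (F : op A n), subm (trl F) S ->
  forall hs : 'I_n.+1 -> A -> A, (forall i, S (hs i)) -> S (fun x => F (fun i => hs i x)).
Proof.
move=> [Sid Scomp] Sdiag; elim=> [|n IH] F HF hs Hhs.
  have -> : (fun x => F (fun i => hs i x)) =
     (fun y => F (fun j => if j == ord0 then y else a0)) \o hs ord0.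
    apply: functional_extensionality => x /=; congr F.
    by apply: functional_extensionality => j; rewrite (ord1 j) eqxx.
  by apply: Scomp; [apply: HF; exists ord0, (fun _ => a0) | apply: Hhs].
pose K := fun s t => F (fun i => if i == ord0 then hs ord0 t else hs i s).
have -> : (fun x => F (fun i => hs i x)) = (fun x => K x x).
  apply: functional_extensionality => x; rewrite /K; congr F.
  by apply: functional_extensionality => i; case: eqP => // ->.
apply: Sdiag => [s|t].
  have -> : K s = (fun y => F (fun j => if j == ord0 then y else hs j s)) \o hs ord0 by [].
  by apply: Scomp; [apply: HF; exists ord0, (fun j => hs j s) | apply: Hhs].
pose F' : op A n := fun y => F (fun i => match unlift ord0 i with Some j => y j | None => hs ord0 t end).
have -> : (fun s => K s t) = (fun s => F' (fun j => hs (lift ord0 j) s)).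
  apply: functional_extensionality => s; rewrite /K /F'; congr F.
  apply: functional_extensionality => i; case: unliftP => [j ->|->].
    by rewrite lift0F.
  by rewrite eqxx.
apply: IH => [h [j [a ->]]|j]; last by apply: Hhs.
apply: HF; exists (lift ord0 j),
  (fun i => match unlift ord0 i with Some k => a k | None => hs ord0 t end).
apply: functional_extensionality => x; rewrite /F'; congr F.
apply: functional_extensionality => i; case: unliftP => [k ->|->].
  by rewrite (inj_eq (@lift_inj _ ord0)).
by rewrite eq_sym lift0F.
Qed.

Lemma clone_of_diag (S : mset A) : monoid S -> subm (@Cst A) S -> diagP S ->
  clone (star S).
Proof.
move=> HS HC Hd; split.
  move=> n i h [i0 [a ->]] /=.
  case: (i == i0); first by case: HS.
  by apply: HC; exists (a i).
move=> n m F gs HF Hgs h [i0 [a ->]] /=.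
apply: (nary_of_diag HS Hd HF
  (hs := fun i y => gs i (fun j => if j == i0 then y else a j))).
by move=> i; apply: Hgs; exists i0, a.
Qed.

Lemma u_closed_of_diag (S : mset A) : monoid S -> subm (@Cst A) S -> diagP S ->
  u_closed S.
Proof.
move=> HS HC Hd f; split => [Hf|Hf N HN HSN _]; last by apply: HSN.
by apply: Hf => //; apply: clone_of_diag.
Qed.

Lemma uclosed_diag (M : mset A) : u_closed M -> diagP M.
Proof.
move=> HM K Hr Hc; apply/HM => N HN HMN Hcl.
pose F : op A 1 := fun v => K (v ord0) (v ord_max).
have HF : subm (trl F) N.
  move=> h [i [a ->]]; apply: HMN; rewrite /F.
  have E : (ord_max == ord0 :> 'I_2) = false by [].
  have [->|->] : i = ord0 \/ i = ord_max.
    by case: i => [[|[|k]] Hi] //; [left|right]; apply: val_inj.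
    by rewrite eqxx E; apply: Hc.
  by rewrite eqxx eq_sym E; apply: Hr.
pose g : op A 0 := fun v => v ord0.
have Hg : star N g.
  move=> h [i [a ->]]; rewrite /g (ord1 i) eqxx; by case: HN.
have := (proj2 Hcl) 1 0 F (fun _ => g) HF (fun _ => Hg).
move=> H; have := H (fun x => K x x); apply.
exists ord0, (fun _ => a0); rewrite /F /g /=.
done.
Qed.

Lemma uclosed_Cst (M : mset A) : u_closed M -> subm (@Cst A) M.
Proof.
move=> HM h [a ->]; apply/HM => N HN HMN Hcl.
have := (proj1 Hcl) 1 ord_max (fun x => a) ; apply.
by exists ord0, (fun _ => a).
Qed.

End Generic.

Section MfBasics.
Variable A : finType.
Implicit Types f g h : A -> A.

Lemma Mf_iter f k : Mf f (iter k f).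
Proof. by left; exists k. Qed.

Lemma Mf_Cst f : subm (@Cst A) (Mf f).
Proof. by move=> g H; right. Qed.

Lemma Mf_monoid f : monoid (Mf f).
Proof.
split; first by left; exists 0.
move=> g h [[k ->]|[a ->]] [[l ->]|[b ->]].
- left; exists (k + l); apply: functional_extensionality => x /=; by rewrite iterD.
- by right; exists (iter k f b).
- by right; exists a.
- by right; exists a.
Qed.

Lemma nonT_two f : ~ Tset f -> exists a b, f a <> f b.
Proof.
move=> HT; apply: NNPP => Hn; apply: HT.
case: (pickP (fun _ : A => true)) => [a _|Hno].
  right; exists (f a); apply: functional_extensionality => x.
  by apply: NNPP => Hx; apply: Hn; exists x, a.
by left; apply: functional_extensionality => x; have := Hno x.
Qed.

Definition form4 f g p q r s :=
  (g p = p /\ g q = q /\ g r = r /\ g s = s) \/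
  (g p = f p /\ g q = f q /\ g r = f r /\ g s = f s) \/
  (exists d, g p = d /\ g q = d /\ g r = d /\ g s = d).

Lemma form4P f g p q r s :
  (forall k, (forall z, iter k f z = z) \/ (forall z, iter k f z = f z) \/
             (forall z w, iter k f z = iter k f w)) ->
  Mf f g -> form4 f g p q r s.
Proof.
move=> H3 [[k ->]|[a ->]]; last by right; right; exists a.
case: (H3 k) => [E|[E|E]].
- by left; rewrite !E.
- by right; left; rewrite !E.
- by right; right; exists (iter k f p); rewrite !(E _ p).
Qed.

End MfBasics.

Ltac d4 H := destruct H as [[? [? [? ?]]]|[[? [? [? ?]]]|[? [? [? [? ?]]]]]]; try congruence.

Section DiagI.
Variable A : finType.
Variable f : A -> A.
Hypothesis Hff : forall x, f (f x) = f x.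
Variable K : A -> A -> A.
Hypothesis Hr : forall a, Mf f (K a).
Hypothesis Hc : forall b, Mf f (fun x => K x b).

Lemma H3I k : (forall z, iter k f z = z) \/ (forall z, iter k f z = f z) \/
             (forall z w, iter k f z = iter k f w).
Proof.
elim: k => [|k [IH|[IH|IH]]]; first by left.
- by right; left => z; rewrite iterS IH.
- by right; left => z; rewrite iterS IH Hff.
- by right; right => z w; rewrite !iterS (IH z w).
Qed.

Lemma RI a p q r s : form4 f (K a) p q r s.
Proof. exact: form4P H3I (Hr a). Qed.
Lemma CI b p q r s : form4 f (fun x => K x b) p q r s.
Proof. exact: form4P H3I (Hc b). Qed.

Lemma I_L1 u x : f u = u -> K u u <> u -> K x x = K u u.
Proof.
move=> fu Du. have R := RI u x u u u. have C := CI x x u u u. simpl in C.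
d4 R; d4 C.
Qed.

Lemma I_L2 u x : f u = u -> K u u = u -> K x x <> x -> K x x <> f x -> K x x = u.
Proof.
move=> fu Du. have R := RI u x u u u. have C := CI x x u u u. simpl in C.
d4 R; d4 C.
Qed.

Lemma I_U x y : K x x = x -> x <> f x -> K y y = f y -> y <> f y -> False.
Proof.
move=> Dx nx Dy ny. have fx := Hff x. have fy := Hff y.
have R := RI x x y y y. have C := CI y x y y y. simpl in C.
d4 R; d4 C.
Qed.

End DiagI.
Arguments I_L1 [A f] Hff [K] Hr Hc [u x].
Arguments I_L2 [A f] Hff [K] Hr Hc [u x].
Arguments I_U [A f] Hff [K] Hr Hc [x y].

Section DiagIfin.
Variable A : finType.

Lemma diagI (f : A -> A) : f \o f = f -> ~ Tset f -> diagP (Mf f).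
Proof.
move=> Hfo HT K Hr Hc.
have Hff x : f (f x) = f x by exact: (congr1 (fun g => g x) Hfo).
have [a [b Hab]] := nonT_two HT.
have fu : f (f a) = f a by apply: Hff.
have fv : f (f b) = f b by apply: Hff.
case: (classic (exists w, f w = w /\ K w w <> w)) => [[w [fw Dw]]|Hno].
  right; exists (K w w); apply: functional_extensionality => x /=.
  exact: (I_L1 Hff Hr Hc fw Dw).
have Dfix w : f w = w -> K w w = w.
  move=> fw; apply: NNPP => Dw; apply: Hno; by exists w.
have P x : K x x = x \/ K x x = f x.
  case: (classic (K x x = x)) => [|n1]; first by left.
  case: (classic (K x x = f x)) => [|n2]; first by right.
  exfalso; have := I_L2 Hff Hr Hc fu (Dfix _ fu) n1 n2.
  have := I_L2 Hff Hr Hc fv (Dfix _ fv) n1 n2. congruence.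
case: (classic (forall x, K x x = x)) => [Hid|].
  by left; exists 0; apply: functional_extensionality => x; rewrite Hid.
move=> /not_all_ex_not [y ny].
have Dy : K y y = f y by case: (P y).
have nyf : y <> f y by congruence.
left; exists 1; apply: functional_extensionality => x /=.
case: (P x) => // Dx.
case: (classic (x = f x)) => [e|ne]; first by congruence.
exfalso; exact: (I_U Hff Hr Hc Dx ne Dy nyf).
Qed.

End DiagIfin.

Section DiagII.
Variable A : finType.
Variable f : A -> A.
Variable c : A.
Hypothesis Hffc : forall x, f (f x) = c.
Variable K : A -> A -> A.
Hypothesis Hr : forall a, Mf f (K a).
Hypothesis Hc : forall b, Mf f (fun x => K x b).

Lemma fcc : f c = c.
Proof. by rewrite -[in RHS](Hffc (f c)) (Hffc c). Qed.

Lemma H3II k : (forall z, iter k f z = z) \/ (forall z, iter k f z = f z) \/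
             (forall z w, iter k f z = iter k f w).
Proof.
case: k => [|[|k]]; first by left.
  by right; left.
right; right => z w; rewrite !iterSr !Hffc.
done.
Qed.

Lemma RII a p q r s : form4 f (K a) p q r s.
Proof. exact: form4P H3II (Hr a). Qed.
Lemma CII b p q r s : form4 f (fun x => K x b) p q r s.
Proof. exact: form4P H3II (Hc b). Qed.

Lemma II_L1 x : K c c <> c -> K x x = K c c.
Proof.
move=> Dc. have fc := fcc. have R := RII c x c c c. have C := CII x x c c c. simpl in C.
d4 R; d4 C.
Qed.

Lemma II_P x : K c c = c -> K x x <> c -> K x x <> x -> K x x <> f x -> False.
Proof.
move=> Dc. have fc := fcc. have R := RII c x c c c. have C := CII x x c c c. simpl in C.
d4 R; d4 C.
Qed.

Lemma II_E2 x y : K x x = f x -> f x <> c -> K y y = c -> f y <> c -> False.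
Proof.
move=> *. have fc := fcc. have fx := Hffc x. have fy := Hffc y.
have R1 := RII x x y y y. have C1 := CII y x y y y. simpl in C1.
have R2 := RII y x y y y. have C2 := CII x x y y y. simpl in C2.
d4 R1; d4 C1; d4 R2; d4 C2.
Qed.

Lemma II_E1 x y z : x <> c -> K x x = x -> y <> c -> K y y <> y -> K c c = c ->
  (K y y = c \/ K y y = f y) -> z <> x -> z <> y -> z <> c ->
  (K z z = c \/ K z z = z \/ K z z = f z) -> False.
Proof.
move=> nxc Dx nyc Dy Dc Py nzx nzy nzc Pz.
have fc := fcc. have fx := Hffc x. have fy := Hffc y. have fz := Hffc z.
have R1 := RII x x y z c. have C1 := CII x x y z c. simpl in C1.
have R2 := RII y x y z c. have C2 := CII y x y z c. simpl in C2.
have R3 := RII z x y z c. have C3 := CII z x y z c. simpl in C3.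
have R4 := RII c x y z c. have C4 := CII c x y z c. simpl in C4.
d4 R1; d4 C1; d4 R2; d4 C2; d4 C4; d4 R4; d4 R3; d4 C3; case: Py => ?; try congruence;
 case: Pz => [?|[?|?]]; congruence.
Qed.

End DiagII.
Arguments II_L1 [A f c] Hffc [K] Hr Hc [x].
Arguments II_P [A f c] Hffc [K] Hr Hc [x].
Arguments II_E1 [A f c] Hffc [K] Hr Hc [x y z].
Arguments II_E2 [A f c] Hffc [K] Hr Hc [x y].

Section DiagIIfin.
Variable A : finType.

Lemma exists_other (x y c : A) : 3 < #|A| -> exists z, z <> x /\ z <> y /\ z <> c.
Proof.
move=> H; apply: NNPP => Hn.
have : #|A| <= size [:: x; y; c].
  apply: leq_trans (card_size _); apply: subset_leq_card; apply/subsetP => z _.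
  case: (boolP (z \in [:: x; y; c])) => // Hz; exfalso; apply: Hn; exists z.
  by split; [|split] => E; move: Hz; rewrite E !inE eqxx ?orbT.
by rewrite /= leqNgt H.
Qed.

Lemma diagII (f : A -> A) : cond_II' f -> ~ Tset f -> diagP (Mf f).
Proof.
move=> [[c Hc2] H4] HT K Hr Hc.
have Hffc x : f (f x) = c by exact: (congr1 (fun g => g x) Hc2).
have fc : f c = c by apply: fcc.
case: (classic (K c c = c)) => [Dc|Dc]; last first.
  right; exists (K c c); apply: functional_extensionality => x /=.
  exact: (II_L1 Hffc Hr Hc Dc).
have P x : K x x = c \/ K x x = x \/ K x x = f x.
  case: (classic (K x x = c)) => [|n1]; first by left.
  case: (classic (K x x = x)) => [|n2]; first by right; left.
  case: (classic (K x x = f x)) => [|n3]; first by right; right.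
  by exfalso; apply: (II_P Hffc Hr Hc Dc n1 n2 n3).
case: (classic (exists x, x <> c /\ K x x = x)) => [[x [nxc Dx]]|Hno].
  left; exists 0; apply: functional_extensionality => y /=.
  apply: NNPP => ny.
  have nyc : y <> c by move=> E; apply: ny; rewrite E.
  have [z [nzx [nzy nzc]]] := exists_other x y c H4.
  have Py : K y y = c \/ K y y = f y by case: (P y) => [|[|]]; auto.
  exfalso; exact: (II_E1 Hffc Hr Hc nxc Dx nyc ny Dc Py nzx nzy nzc (P z)).
case: (classic (exists x, K x x = f x /\ f x <> c)) => [[x [Dx fx]]|Hno2].
  left; exists 1; apply: functional_extensionality => y /=.
  apply: NNPP => ny.
  case: (P y) => [Dy|[Dy|Dy]] //.
    case: (classic (f y = c)) => [fy|fy]; first by apply: ny; rewrite Dy fy.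
    exact: (II_E2 Hffc Hr Hc Dx fx Dy fy).
  case: (classic (y = c)) => [E|nyc].
    by apply: ny; rewrite Dy E fc.
  by apply: Hno; exists y.
right; exists c; apply: functional_extensionality => x /=.
case: (P x) => [|[Dx|Dx]] //.
  case: (classic (x = c)) => [E|nxc]; first by rewrite E Dc.
  by exfalso; apply: Hno; exists x.
case: (classic (f x = c)) => [E|nfx]; first by rewrite Dx E.
by exfalso; apply: Hno2; exists x.
Qed.

End DiagIIfin.

Section Perm.
Variable A : finType.
Variable f : A -> A.
Variable p : nat.
Hypothesis pp : prime p.
Hypothesis hp : forall x, iter p f x = x.

Lemma p_gt0 : 0 < p. Proof. exact: prime_gt0. Qed.

Lemma iter_mulp n z : iter (n * p) f z = z.
Proof. by rewrite iterM; apply: iter_fix; apply: hp. Qed.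

Lemma iter_back a x : iter ((p.-1) * a) f (iter a f x) = x.
Proof.
by rewrite -iterD -{2}(mul1n a) -mulnDl addn1 prednK ?p_gt0 // mulnC iter_mulp.
Qed.

Lemma f_inj : injective f.
Proof.
move=> x y E; rewrite -(hp x) -(hp y).
by rewrite -(prednK p_gt0) !iterSr E.
Qed.

Lemma iter_inj n : injective (iter n f).
Proof. elim: n => [|n IH] x y //=; move/f_inj; exact: IH. Qed.

Lemma period x k : f x <> x -> iter k f x = x -> p %| k.
Proof.
move=> nx Hk; rewrite /dvdn; apply/eqP; apply: NNPP => Hr.
have Hr0 : 0 < k %% p by rewrite lt0n; apply/eqP.
have Hrp : k %% p < p by rewrite ltn_mod p_gt0.
have Hx : iter (k %% p) f x = x.
  by rewrite -[RHS]Hk [in RHS](divn_eq k p) iterD iter_mulp.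
have cop : coprime (k %% p) p.
  rewrite coprime_sym prime_coprime //; apply/negP => /dvdn_leq => /(_ Hr0).
  by rewrite leqNgt Hrp.
have [[u v] /= Huv] := (coprimeP _ Hr0 cop).
have E : u * (k %% p) = 1 + v * p.
  have : 0 < u * (k %% p) - v * p by rewrite Huv.
  rewrite subn_gt0 => /ltnW Hle.
  by rewrite -(subnK Hle) Huv.
apply: nx; rewrite -[RHS](iter_fix u Hx) -iterM E iterD iter_mulp.
done.
Qed.

Lemma regular x a b z : f x <> x -> iter a f x = iter b f x -> iter a f z = iter b f z.
Proof.
move=> nx.
wlog lab : a b / a <= b.
  move=> W E; case: (leqP a b) => [H|H]; first exact: W.
  by symmetry; apply: W => //; apply: ltnW.
move=> E.
have ny : f (iter a f x) <> iter a f x.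
  move=> Hy; apply: nx.
  have := iter_back a x; rewrite (iter_fix _ Hy) => <-; done.
have Hd : p %| b - a.
  apply: (period ny); by rewrite -iterD subnK.
move: Hd => /dvdnP [q Hq].
by rewrite -(subnK lab) iterD Hq iter_mulp.
Qed.

Definition Rel x y := exists k, iter k f x = y.

Lemma Rel_of x y a b : iter a f x = iter b f y -> Rel y x.
Proof.
move=> E; exists ((p.-1) * a + b); rewrite iterD -E.
by rewrite iter_back.
Qed.

Lemma Rel_sym x y : Rel x y -> Rel y x.
Proof. by move=> [k E]; apply: (@Rel_of _ _ k 0); rewrite E. Qed.

Lemma Rel_trans x y z : Rel x y -> Rel y z -> Rel x z.
Proof. by move=> [k E] [l F]; exists (l + k); rewrite iterD E. Qed.

Lemma Rel_refl x : Rel x x.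
Proof. by exists 0. Qed.

Lemma Rel_f x : Rel x (f x).
Proof. by exists 1. Qed.

End Perm.
Arguments regular [A f p] pp hp [x a b z].
Arguments iter_inj [A f p] pp hp [n].
Arguments Rel_sym [A f p] pp hp [x y].
Arguments Rel_trans [A f x y z].
Arguments period [A f p] pp hp [x k].

Section DiagIII.
Variable A : finType.
Variable f : A -> A.
Variable K : A -> A -> A.
Hypothesis Hr : forall a, Mf f (K a).
Hypothesis Hc : forall b, Mf f (fun x => K x b).

Lemma MfP s a : Mf f s -> (exists k, forall z, s z = iter k f z) \/ (forall z, s z = s a).
Proof.
move=> [[k ->]|[d ->]]; first by left; exists k.
by right.
Qed.

Lemma GL1 u x : f u = u -> K u u <> u -> K x x = K u u.
Proof.
move=> fu Du.
case: (MfP u (Hr u)) => [[k Rk]|Rc].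
  by exfalso; apply: Du; rewrite Rk iter_fix.
case: (MfP x (Hc x)) => [[k Ck]|Cc] /=  in Rc *.
  by exfalso; apply: Du; rewrite -(Rc x) Ck iter_fix.
by rewrite -(Cc u) Rc.
Qed.

Lemma GL2 u x : f u = u -> K u u = u -> K x x = u \/ exists k, K x x = iter k f x.
Proof.
move=> fu Du.
case: (MfP x (Hc x)) => [[k Ck]|Cc] /=; first by right; exists k.
case: (MfP u (Hr u)) => [[k Rk]|Rc]; first by right; exists k; rewrite -(Cc u) Rk.
by left; rewrite -(Cc u) Rc.
Qed.

End DiagIII.
Arguments GL1 [A f K] Hr Hc [u x].
Arguments GL2 [A f K] Hr Hc [u x].

Section DiagIII2.
Variable A : finType.
Variable f : A -> A.
Variable p : nat.
Hypothesis pp : prime p.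
Hypothesis hp : forall x, iter p f x = x.
Variable K : A -> A -> A.
Hypothesis Hr : forall a, Mf f (K a).
Hypothesis Hc : forall b, Mf f (fun x => K x b).

Lemma L3 x y : ~ Rel f x y -> K x x = K y y \/ exists e, K x x = iter e f x /\ K y y = iter e f y.
Proof.
move=> nR.
case: (MfP x (Hc x)) => [[a Ca]|Cc] /=; case: (MfP y (Hr y)) => [[b Rb]|Rc].
- exfalso; apply: nR; apply: (@Rel_of _ f p pp hp y x a b); by rewrite -Ca Rb.
- by right; exists a; rewrite Ca -(Rc x) Ca.
- by right; exists b; rewrite -(Cc y) Rb Rb.
- by left; rewrite -(Cc y) Rc.
Qed.

Lemma LB1 z t e : ~ Rel f z t -> f t <> t -> K t t = iter e f t ->
  K z z = iter e f t \/ K z z = iter e f z.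
Proof.
move=> nR nt Dt.
case: (L3 nR) => [E|[e' [E1 E2]]]; first by left; rewrite E Dt.
right; rewrite E1; apply: (regular pp hp nt); by rewrite -E2 -Dt.
Qed.

Lemma LBside s t e z : f s <> s -> f t <> t -> ~ Rel f s t ->
  K s s = iter e f s -> K t t = iter e f t -> Rel f z s -> K z z = iter e f z.
Proof.
move=> ns nt nst Ds Dt Hzs.
have nzt : ~ Rel f z t.
  move=> Hzt; apply: nst; apply: (Rel_trans (Rel_sym pp hp Hzs) Hzt).
case: (LB1 nzt nt Dt) => // Ezt.
exfalso.
have nzt' : ~ Rel f z (f t).
  move=> H; apply: nzt; apply: (Rel_trans H (Rel_sym pp hp (Rel_f f t))).
have Et' : K (f t) (f t) = iter e f t.
  case: (L3 nzt') => [E|[e1 [E1 E2]]]; first by rewrite -E.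
  exfalso; apply: nzt; apply: (Rel_sym pp hp); apply: (@Rel_of _ f p pp hp z t e1 e).
  by rewrite -E1 Ezt.
have nts : ~ Rel f (f t) s.
  move=> H; apply: nst; apply: (Rel_sym pp hp); apply: (Rel_trans (Rel_f f t) H).
case: (L3 nts) => [E|[e2 [E1 E2]]].
  apply: nst; have : iter e f t = iter e f s by rewrite -Et' E Ds.
  by move/(iter_inj pp hp) ->; apply: Rel_refl.
have : iter e2 f (f t) = iter e f (f t).
  apply: (regular pp hp ns); by rewrite -E2 Ds.
rewrite -E1 Et' => /(iter_inj pp hp) E3; apply: nt; by rewrite -E3.
Qed.

End DiagIII2.

Section DiagIIIfin.
Variable A : finType.

Lemma diagIIIfix (f : A -> A) p u v : prime p -> (forall x, iter p f x = x) ->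
  u <> v -> f u = u -> f v = v -> diagP (Mf f).
Proof.
move=> pp hp nuv fu fv K Hr Hc.
case: (classic (exists w, f w = w /\ K w w <> w)) => [[w [fw Dw]]|Hno].
  right; exists (K w w); apply: functional_extensionality => x /=.
  exact: (GL1 Hr Hc fw Dw).
have Dfix w : f w = w -> K w w = w.
  move=> fw; apply: NNPP => Dw; apply: Hno; by exists w.
case: (MfP u (Hc u)) => [[m Cm]|Cc] /=.
  left; exists m; apply: functional_extensionality => x /=.
  case: (classic (f x = x)) => [fx|nx].
    by rewrite Dfix // iter_fix.
  case: (MfP u (Hr x)) => [[k Rk]|Rc].
    exfalso; apply: nx.
    have : iter m f x = iter m f u by rewrite -Cm Rk !iter_fix.
    by move/(iter_inj pp hp) ->.
  by rewrite (Rc x) Cm.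
case: (MfP v (Hr v)) => [[m Rm]|Rc].
  left; exists m; apply: functional_extensionality => x /=.
  case: (classic (f x = x)) => [fx|nx].
    by rewrite Dfix // iter_fix.
  case: (MfP v (Hc x)) => [[k Ck]|Cc2] /=.
    exfalso; apply: nx.
    have : iter m f x = iter m f v by rewrite -Rm Ck !iter_fix.
    by move/(iter_inj pp hp) ->.
  by rewrite (Cc2 x) Rm.
exfalso; apply: nuv.
by rewrite -(Dfix _ fu) -(Cc v) Rc Dfix.
Qed.

Lemma diagIIIcyc (f : A -> A) p x1 y1 : prime p -> (forall x, iter p f x = x) ->
  f x1 <> x1 -> f y1 <> y1 -> ~ Rel f x1 y1 -> diagP (Mf f).
Proof.
move=> pp hp nx1 ny1 nR K Hr Hc.
case: (classic (exists s t, f s <> s /\ f t <> t /\ ~ Rel f s t /\ K s s <> K t t))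
  => [[s [t [ns [nt [nst Dst]]]]]|Hno].
  case: (L3 pp hp Hr Hc nst) => [//|[e [Ds Dt]]].
  left; exists e; apply: functional_extensionality => z /=.
  case: (classic (Rel f z s)) => Hzs.
    exact: (LBside pp hp Hr Hc ns nt nst Ds Dt Hzs).
  case: (classic (Rel f z t)) => Hzt.
    apply: (LBside pp hp Hr Hc nt ns _ Dt Ds Hzt).
    by move=> H; apply: nst; apply: (Rel_sym pp hp).
  case: (LB1 pp hp Hr Hc Hzt nt Dt) => // E1.
  case: (LB1 pp hp Hr Hc Hzs ns Ds) => // E2.
  exfalso; apply: nst.
  have : iter e f s = iter e f t by rewrite -E1 -E2.
  by move/(iter_inj pp hp) ->; apply: Rel_refl.
have Hno' s t : f s <> s -> f t <> t -> ~ Rel f s t -> K s s = K t t.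
  move=> ns nt nst; apply: NNPP => D; apply: Hno; by exists s, t.
have Exy := Hno' _ _ nx1 ny1 nR.
right; exists (K x1 x1); apply: functional_extensionality => z /=.
case: (classic (f z = z)) => [fz|nz].
  have nzx : ~ Rel f z x1.
    by move=> [k Hk]; apply: nx1; rewrite -Hk !iter_fix.
  have nzy : ~ Rel f z y1.
    by move=> [k Hk]; apply: ny1; rewrite -Hk !iter_fix.
  case: (L3 pp hp Hr Hc nzx) => [//|[e [_ E1]]].
  case: (L3 pp hp Hr Hc nzy) => [->//|[e' [_ E2]]].
  exfalso; apply: nR; apply: (Rel_sym pp hp); apply: (@Rel_of _ f p pp hp x1 y1 e e').
  by rewrite -E1 -E2.
case: (classic (Rel f z x1)) => Hzx; last by apply: Hno'.
have nzy : ~ Rel f z y1.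
  move=> H; apply: nR; exact: (Rel_trans (Rel_sym pp hp Hzx) H).
by rewrite (Hno' _ _ nz ny1 nzy).
Qed.

End DiagIIIfin.

Section Ind.
Variable A : finType.
Variable h : A -> A.
Variable p : nat.
Variable x0 : A.
Hypothesis hp : forall x, iter p h x = x.
Hypothesis hp0 : 0 < p.
Hypothesis hdist : forall i j, i < p -> j < p -> iter i h x0 = iter j h x0 -> i = j.

Definition seqx := mkseq (fun i => iter i h x0) p.
Definition indx z := index z seqx.

Lemma iter_mulp' n z : iter (n * p) h z = z.
Proof. by rewrite iterM; apply: iter_fix; apply: hp. Qed.

Lemma iter_modp n z : iter n h z = iter (n %% p) h z.
Proof. by rewrite {1}(divn_eq n p) addnC iterD iter_mulp'. Qed.

Lemma uniq_seqx : uniq seqx.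
Proof. by apply/mkseq_uniqP => i j Hi Hj E; apply: hdist. Qed.

Lemma ind_iter k : indx (iter k h x0) = k %% p.
Proof.
have Hk : k %% p < p by rewrite ltn_mod.
rewrite iter_modp /indx.
have -> : iter (k %% p) h x0 = nth x0 seqx (k %% p) by rewrite nth_mkseq.
by rewrite index_uniq ?size_mkseq ?uniq_seqx.
Qed.

Lemma ind_spec z : (exists k, iter k h x0 = z) -> iter (indx z) h x0 = z /\ indx z < p.
Proof.
move=> [k <-]; rewrite ind_iter -iter_modp; split => //.
by rewrite ltn_mod.
Qed.

Lemma eqmod_iter a b : iter a h x0 = iter b h x0 -> a %% p = b %% p.
Proof. by move=> E; rewrite -!ind_iter E. Qed.

End Ind.

Section Lcyc.
Variable A : finType.
Variable M : mset A.
Hypothesis HM : monoid M.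
Hypothesis HC : subm (@Cst A) M.
Hypothesis Md : diagP M.
Variable h : A -> A.
Hypothesis hM : M h.
Variable p : nat.
Variable x0 : A.
Hypothesis hp : forall x, iter p h x = x.
Hypothesis hp0 : 0 < p.
Hypothesis hdist : forall i j, i < p -> j < p -> iter i h x0 = iter j h x0 -> i = j.
Hypothesis Hrep : forall z, h z <> z -> exists k, iter k h x0 = z.
Hypothesis Huniq : forall u v, h u = u -> h v = v -> u = v.

Notation ind := (indx h p x0).

Lemma M_iter k : M (iter k h).
Proof.
elim: k => [|k IH]; first by case: HM.
have -> : iter k.+1 h = h \o iter k h.
  by apply: functional_extensionality => x.
by case: HM => _ Hc; apply: Hc.
Qed.

Lemma rowK x : M (fun y => if h x == x then x else iter (ind x) h y).
Proof.
case: eqP => _; first by apply: HC; exists x.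
exact: M_iter.
Qed.

Lemma colK y : M (fun x => if h x == x then x else iter (ind x) h y).
Proof.
case: (classic (h y = y)) => [fy|ny].
  apply: HC; exists y; apply: functional_extensionality => x.
  case: eqP => [fx|nx]; [exact: Huniq|exact: iter_fix].
have [Ey _] := ind_spec hp hp0 hdist (Hrep ny).
have -> : (fun x => if h x == x then x else iter (ind x) h y) = iter (ind y) h.
  apply: functional_extensionality => x.
  case: eqP => [fx|nx]; first by rewrite iter_fix.
  have [Ex _] := ind_spec hp hp0 hdist (Hrep nx).
  by rewrite -{1}Ey -{2}Ex -!iterD addnC.
exact: M_iter.
Qed.

Lemma psi_in m : M (fun x => iter (m * ind x) h x).
Proof.
elim: m => [|m IH].
  have -> : (fun x => iter (0 * ind x) h x) = (fun x => x) by [].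
  by case: HM.
pose K := fun x y => if h x == x then x else iter (ind x) h y.
have -> : (fun x => iter (m.+1 * ind x) h x) =
   (fun x => K x (iter (m * ind x) h x)).
  apply: functional_extensionality => x; rewrite /K.
  case: eqP => [fx|nx]; first by rewrite iter_fix.
  by rewrite -iterD mulSn.
apply: (@Md (fun x y => K x (iter (m * ind y) h y))) => [a|b].
  have -> : (fun y => K a (iter (m * ind y) h y)) =
     (fun y => if h a == a then a else iter (ind a) h y) \o (fun y => iter (m * ind y) h y) by [].
  by case: HM => _ Hc; apply: Hc => //; apply: rowK.
exact: colK.
Qed.

Lemma psi_val m x : h x <> x -> iter (m * ind x) h x = iter (m.+1 * ind x) h x0.
Proof.
move=> nx; have [Ex _] := ind_spec hp hp0 hdist (Hrep nx).
transitivity (iter (m * ind x) h (iter (ind x) h x0)); first by rewrite Ex.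
by rewrite -iterD mulSn addnC.
Qed.

End Lcyc.

Section Three.
Variable A : finType.
Variable M : mset A.
Hypothesis HM : monoid M.
Hypothesis HC : subm (@Cst A) M.
Hypothesis Md : diagP M.

Lemma three a b c s : a <> b -> a <> c -> b <> c -> (forall x, x = a \/ x = b \/ x = c) ->
  M s -> s a = b -> s c = c -> (s b = a \/ s b = c) ->
  exists e, M e /\ ~ Tset e /\ cond_I e.
Proof.
move=> nab nac nbc Hall Ms sab scc sb.
have Mid : M (fun x => x) by case: HM.
pose K := fun x y => if x == a then y else if x == b then s y else c.
have Ka y : K a y = y by rewrite /K eqxx.
have Kb y : K b y = s y.
  by rewrite /K (introF eqP (nesym nab)) eqxx.
have Kc y : K c y = c.
  by rewrite /K (introF eqP (nesym nac)) (introF eqP (nesym nbc)).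
have HK : M (fun x => K x x).
  apply: (@Md K) => [x|y].
    case: (Hall x) => [->|[->|->]].
    - by have -> : K a = (fun y => y) by apply: functional_extensionality.
    - by have -> : K b = s by apply: functional_extensionality.
    - by apply: HC; exists c; apply: functional_extensionality.
  case: (Hall y) => [->|[->|->]].
  - have -> : (fun x => K x a) = (fun x => x) => //.
    apply: functional_extensionality => x.
    by case: (Hall x) => [->|[->|->]]; rewrite ?Ka ?Kb ?Kc.
  - have -> : (fun x => K x b) = s => //.
    apply: functional_extensionality => x.
    by case: (Hall x) => [->|[->|->]]; rewrite ?Ka ?Kb ?Kc.
  - apply: HC; exists c; apply: functional_extensionality => x.
    by case: (Hall x) => [->|[->|->]]; rewrite ?Ka ?Kb ?Kc.
exists (fun x => K x x); split => //; split.
  case => [E|[d E]].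
    have := congr1 (fun g => g b) E => /=; rewrite Kb.
    case: sb => ->; by [move/esym|].
  have := congr1 (fun g => g a) E; have := congr1 (fun g => g c) E => /=.
  rewrite Ka Kc => E1 E2; apply: nac; by rewrite E1 E2.
apply: functional_extensionality => x /=.
case: (Hall x) => [->|[->|->]]; rewrite ?Ka ?Kb ?Kc //.
by case: sb => ->; rewrite ?Ka ?Kc.
Qed.

End Three.

Section FindGood.
Variable A : finType.

Definition good (h : A -> A) := cond_I h \/ cond_II' h \/ cond_III' h.

Lemma idem_pow (g : A -> A) : exists k, 0 < k /\ forall x, iter k g (iter k g x) = iter k g x.
Proof.
pose N := #|{ffun A -> A}|.
pose F : 'I_N.+1 -> {ffun A -> A} := fun i => [ffun x => iter i g x].
have [i [j [nij Eij]]] : exists i j : 'I_N.+1, i <> j /\ F i = F j.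
  apply: NNPP => Hn.
  have inj : injective F.
    move=> i j E; apply: NNPP => ne; apply: Hn; by exists i, j.
  by have := leq_card F inj; rewrite card_ord ltnn.
have Eq : forall x, iter i g x = iter j g x.
  by move=> x; have := congr1 (fun f : {ffun A -> A} => f x) Eij; rewrite /F !ffunE.
wlog lij : i j nij Eij Eq / i < j.
  move=> W; case: (ltngtP i j) => H; first exact: (W i j nij Eij Eq H).
    by apply: (W j i (nesym nij) (esym Eij)) => // x; rewrite Eq.
  by exfalso; apply: nij; apply: val_inj.
set d := j - i.
have d0 : 0 < d by rewrite subn_gt0.
have step t x : i <= t -> iter (t + d) g x = iter t g x.
  move=> it.
  rewrite -(subnK it) -addnA iterD /d (addnC i) subnK ?(ltnW lij) // -Eq -iterD.
  done.
have stepm t m x : i <= t -> iter (t + m * d) g x = iter t g x.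
  move=> it; elim: m => [|m IH]; first by rewrite addn0.
  have it' : i <= t + m * d by apply: (leq_trans it); apply: leq_addr.
  by rewrite mulSn addnCA addnC step.
exists (d * i.+1); split; first by rewrite muln_gt0 d0.
move=> x; rewrite -iterD {2}mulnC stepm //.
by apply: (leq_trans (leqnSn i)); rewrite -{1}(mul1n i.+1) leq_mul2r d0 orbT.
Qed.

Lemma all3 (a b c : A) : #|A| <= 3 -> a <> b -> a <> c -> b <> c ->
  forall x, x = a \/ x = b \/ x = c.
Proof.
move=> H3 nab nac nbc x; apply: NNPP => Hn.
have Hu : uniq [:: x; a; b; c].
  rewrite /= !inE !negb_or; repeat (apply/andP; split) => //; apply/eqP => E;
  by [apply: Hn; left|apply: Hn; right; left|apply: Hn; right; right|apply: nab|apply: nac|apply: nbc].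
have := max_card (mem [:: x; a; b; c]).
by rewrite (card_uniqP Hu) /= => /leq_trans/(_ H3).
Qed.

End FindGood.

Section Cases.
Variable A : finType.
Variable M : mset A.
Hypothesis HM : monoid M.
Hypothesis HC : subm (@Cst A) M.
Hypothesis Md : diagP M.
Hypothesis hA : 3 <= #|A|.

Lemma nil_case g : M g -> ~ Tset g -> (exists k a, forall x, iter k g x = a) ->
  exists h, M h /\ ~ Tset h /\ good h.
Proof.
move=> Mg Tg [k [a Ha]].
pose P := fun n => [exists a, [forall x, iter n g x == a]].
have HP : exists n, P n.
  by exists k; apply/existsP; exists a; apply/forallP => x; rewrite Ha.
case: (ex_minnP HP) => k1 /existsP [a1 /forallP Ha1] Hmin.
have Ha1' x : iter k1 g x = a1 by apply/eqP.
have [b1 [b2 nb]] := nonT_two Tg.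
have k1_gt1 : 1 < k1.
  case: k1 Ha1 Ha1' Hmin => [|[|k1]] Ha1 Ha1' Hmin //.
    exfalso; apply: nb; have E1 : b1 = a1 := Ha1' b1; have E2 : b2 = a1 := Ha1' b2.
    by rewrite E1 E2.
  exfalso; apply: Tg; right; exists a1; apply: functional_extensionality => x.
  exact: (Ha1' x).
pose h := iter k1.-1 g.
have Mh : M h by apply: M_iter.
pose c := iter k1.-2 g a1.
have Hffc x : h (h x) = c.
  rewrite /h /c -iterD -(Ha1' x) -iterD; congr iter; lia.
have Th : ~ Tset h.
  case => [E|[d E]].
    apply: Tg; right; exists a1; apply: functional_extensionality => x.
    rewrite -(Ha1' x) -(prednK (ltnW k1_gt1)) iterS.
    have Ex : iter k1.-1 g x = x := congr1 (fun f => f x) E.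
    by rewrite Ex.
  have : P k1.-1.
    apply/existsP; exists d; apply/forallP => x.
    have Ex : iter k1.-1 g x = d := congr1 (fun f => f x) E.
    by rewrite Ex.
  move/Hmin; rewrite leqNgt; move/negP; apply.
  by rewrite prednK // (ltnW k1_gt1).
case: (leqP 4 #|A|) => H4.
  exists h; split => //; split => //; right; left; split => //.
  by exists c; apply: functional_extensionality => x /=.
have H3 : #|A| <= 3 by rewrite -ltnS.
have [a0 na0] : exists a0, h a0 <> c.
  apply: NNPP => Hn; apply: Th; right; exists c.
  apply: functional_extensionality => x; apply: NNPP => Hx; apply: Hn; by exists x.
have hc := fcc Hffc.
have hb : h (h a0) = c by apply: Hffc.
have nab : a0 <> h a0.
  by move=> E; apply: na0; rewrite {1}E; apply: Hffc.
have nac : a0 <> c by move=> E; apply: na0; rewrite E hc.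
have nbc : h a0 <> c by [].
have [e [Me [Te Ie]]] :=
  three HM HC Md nab nac nbc (all3 H3 nab nac nbc) Mh erefl hc (or_intror hb).
by exists e; split => //; split => //; left.
Qed.

End Cases.

Section Perm2.
Variable A : finType.
Variable M : mset A.
Hypothesis HM : monoid M.
Hypothesis HC : subm (@Cst A) M.
Hypothesis Md : diagP M.
Hypothesis hA : 3 <= #|A|.

Lemma cyc_case h p x0 : M h -> prime p -> (forall x, iter p h x = x) -> h x0 <> x0 ->
  ~ (exists x y, x <> y /\ h x = x /\ h y = y) ->
  ~ (exists x y, on_cycle h p x /\ on_cycle h p y /\ forall k, iter k h x <> y) ->
  exists e, M e /\ ~ Tset e /\ good e.
Proof.
move=> Mh pp hp nx0 N1 N2.
have hp0 : 0 < p by apply: prime_gt0.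
have p1 : 1 < p by apply: prime_gt1.
have onc z : h z <> z -> on_cycle h p z.
  move=> nz; split; first by apply: hp.
  move=> k /andP [k0 kp] E; have := period pp hp nz E.
  by move/(dvdn_leq k0); rewrite leqNgt kp.
have hdist : forall i j, i < p -> j < p -> iter i h x0 = iter j h x0 -> i = j.
  move=> i j ip jp.
  wlog lij : i j ip jp / i <= j.
    move=> W E; case: (leqP i j) => H; first exact: W.
    by apply/esym/W => //; apply: ltnW.
  move=> E.
  have E2 : iter i h x0 = iter i h (iter (j - i) h x0) by rewrite -iterD subnKC.
  move/(iter_inj pp hp): E2 => /esym E3.
  have := period pp hp nx0 E3.
  case: (posnP (j - i)) => [/eqP|H].
    by rewrite subn_eq0 => H _; apply/eqP; rewrite eqn_leq lij H.
  move/(dvdn_leq H) => H2; exfalso; move: H2; rewrite leqNgt; move/negP; apply.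
  by apply: (leq_ltn_trans (leq_subr _ _)).
have Hrep : forall z, h z <> z -> exists k, iter k h x0 = z.
  move=> z nz; apply: NNPP => Hn; apply: N2; exists x0, z; split; first exact: onc.
  split; first exact: onc.
  by move=> k E; apply: Hn; exists k.
have Huniq : forall u v, h u = u -> h v = v -> u = v.
  move=> u v fu fv; apply: NNPP => ne; apply: N1; by exists u, v.
have hinj := f_inj pp hp.
pose ind := indx h p x0.
have Mpsi m : M (fun x => iter (m * ind x) h x).
  exact: (psi_in HM HC Md Mh hp hp0 hdist Hrep Huniq m).
have psv m x : h x <> x -> iter (m * ind x) h x = iter (m.+1 * ind x) h x0.
  exact: (psi_val hp hp0 hdist Hrep m).
have indI k : ind (iter k h x0) = k %% p by apply: (ind_iter hp hp0 hdist).
have eqI a b : iter a h x0 = iter b h x0 -> a %% p = b %% p.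
  move=> E; exact: (eqmod_iter hp hp0 hdist E).
have modI n : iter n h x0 = iter (n %% p) h x0 by apply: (iter_modp hp).
have hx1 : h (h x0) <> h x0 by move=> /hinj.
case: (classic (exists u, h u = u)) => [[u fu]|Hnf].
  pose e := fun x => iter (p.-1 * ind x) h x.
  have ev x : e x = if h x == x then x else x0.
    rewrite /e; case: eqP => [fx|nx]; first by rewrite iter_fix.
    by rewrite psv // prednK // mulnC iter_mulp'.
  exists e; split; first exact: Mpsi.
  split.
    case => [E|[d E]].
      have := congr1 (fun f => f (h x0)) E => /=; rewrite ev.
      by case: eqP => // _ /esym.
    have := congr1 (fun f => f u) E; have := congr1 (fun f => f x0) E => /=.
    rewrite !ev fu eqxx; case: eqP => // _ E1 E2; apply: nx0.
    have : u = x0 by rewrite E1 E2.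
    by move=> <-.
  left; apply: functional_extensionality => x /=.
  case: (eqVneq (h x) x) => [fx|nx].
    have E : e x = x by rewrite ev fx eqxx.
    by rewrite !E.
  have E : e x = x0 by rewrite ev (negbTE nx).
  by rewrite E ev (introF eqP nx0).
have nf x : h x <> x by move=> E; apply: Hnf; exists x.
have isp x := ind_spec hp hp0 hdist (Hrep x (nf x)).
have p3 : 3 <= p.
  apply: (leq_trans hA).
  have -> : p = size (seqx h p x0) by rewrite size_mkseq.
  apply: leq_trans (card_size _); apply: subset_leq_card; apply/subsetP => x _.
  rewrite -index_mem size_mkseq; by case: (isp x).
case: (ltngtP p 3) => Hp3.
- by move: Hp3; rewrite ltnNge p3.
- (* p >= 5: reflection *)
  have p5 : 4 < p.
    move: Hp3; rewrite leq_eqVlt => /orP [/eqP E|//].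
    by move: pp; rewrite -E.
  pose r := fun x => iter (p.-2 * ind x) h x.
  have rv x : r x = iter (p.-1 * ind x) h x0.
    by rewrite /r psv //; congr iter; congr muln; lia.
  have [q Hq] : exists q, p = q.+2 by exists p.-2; lia.
  have rr x : r (r x) = x.
    rewrite rv (rv x) indI modI modnMmr -modI.
    have [Ex _] := isp x.
    rewrite -[RHS]Ex modI [RHS]modI; congr iter.
    rewrite mulnA.
    have -> : p.-1 * p.-1 * ind x = (p.-2 * ind x) * p + ind x.
      rewrite Hq /=; nia.
    by rewrite modnMDl.
  have rx1 : r (iter 1 h x0) = iter p.-1 h x0 by rewrite rv indI modn_small // muln1.
  have rx2 : r (iter 2 h x0) = iter (p.-1 * 2) h x0 by rewrite rv indI modn_small //; lia.
  have md2 : (p.-1 * 2) %% p = p - 2.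
    have -> : p.-1 * 2 = p + (p - 2) by lia.
    by rewrite modnDl modn_small //; lia.
  exists r; split; first exact: Mpsi.
  split.
    case => [E|[d E]].
      have H1 : r (iter 1 h x0) = iter 1 h x0 := congr1 (fun f => f (iter 1 h x0)) E.
      move: H1; rewrite rx1 => /(eqI _ _); rewrite !modn_small //; lia.
    have H1 : r (iter 1 h x0) = d := congr1 (fun f => f (iter 1 h x0)) E.
    have H0 : r x0 = d := congr1 (fun f => f x0) E.
    have i0 : ind x0 = 0 by have := indI 0; rewrite mod0n.
    have r0 : r x0 = iter 0 h x0 by rewrite rv i0 muln0.
    move: H1; rewrite rx1 -H0 r0 => /(eqI _ _); rewrite !modn_small //; lia.
  right; right; exists 2; split => //; split.
    by apply: functional_extensionality => x /=; apply: rr.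
  right; exists (iter 1 h x0), (iter 2 h x0).
  have orb1 k : iter k r (iter 1 h x0) = iter 1 h x0 \/ iter k r (iter 1 h x0) = iter p.-1 h x0.
    elim: k => [|k [IH|IH]]; first by left.
      by right; rewrite iterS IH rx1.
    by left; rewrite iterS IH -rx1 rr.
  split.
    split; first by rewrite /= rr.
    move=> k /andP [k0 k2]; have -> : k = 1 by lia.
    change (r (iter 1 h x0) <> iter 1 h x0); rewrite rx1 => /(eqI _ _); rewrite !modn_small //; lia.
  split.
    split; first by rewrite /= rr.
    move=> k /andP [k0 k2]; have -> : k = 1 by lia.
    change (r (iter 2 h x0) <> iter 2 h x0); rewrite rx2 => /(eqI _ _); rewrite md2 modn_small //; lia.
  move=> k; case: (orb1 k) => -> /(eqI _ _); rewrite !modn_small //; lia.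
-
  pose s := fun x => iter (1 * ind x) h x.
  have Ms : M s by apply: Mpsi.
  have n01 : iter 1 h x0 <> iter 2 h x0 by move/(eqI _ _); rewrite Hp3.
  have n0 : iter 1 h x0 <> x0 by move=> E; apply: nx0.
  have n2 : iter 2 h x0 <> x0.
    by move=> E; have := eqI 2 0 E; rewrite Hp3.
  have Hall x : x = iter 1 h x0 \/ x = iter 2 h x0 \/ x = x0.
    have [Ex Hi] := isp x.
    rewrite -Ex; move: (indx h p x0 x) Hi => [|[|[|i]]] Hi /=; [auto|auto|auto|lia].
  have sa : s (iter 1 h x0) = iter 2 h x0 by rewrite /s indI Hp3.
  have sb : s (iter 2 h x0) = iter 1 h x0.
    by rewrite /s indI Hp3 -iterD modI Hp3.
  have i0 : ind x0 = 0 by have := indI 0; rewrite mod0n.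
  have sc : s x0 = x0 by rewrite /s i0.
  have [e [Me [Te Ie]]] := three HM HC Md n01 n0 n2 Hall Ms sa sc (or_introl sb).
  by exists e; split => //; split => //; left.
Qed.

End Perm2.

Section Find.
Variable A : finType.
Variable M : mset A.
Hypothesis HM : monoid M.
Hypothesis HC : subm (@Cst A) M.
Hypothesis Md : diagP M.
Hypothesis hA : 3 <= #|A|.

Lemma perm_case g : M g -> ~ Tset g -> (exists k, 0 < k /\ forall x, iter k g x = x) ->
  exists h, M h /\ ~ Tset h /\ good h.
Proof.
move=> Mg Tg [k [k0 Hk]].
pose P := fun n => (0 < n) && [forall x, iter n g x == x].
have HP : exists n, P n.
  by exists k; rewrite /P k0 /=; apply/forallP => x; rewrite Hk.
case: (ex_minnP HP) => k1 /andP [k1_0 /forallP Hk1] Hmin.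
have Hk1' x : iter k1 g x = x by apply/eqP.
have k1_gt1 : 1 < k1.
  case: k1 k1_0 Hk1 Hk1' Hmin => [|[|k1]] // _ _ Hk1' _.
  exfalso; apply: Tg; left; apply: functional_extensionality => x; exact: (Hk1' x).
pose p := pdiv k1.
have pp : prime p by apply: pdiv_prime.
pose q := k1 %/ p.
pose h := iter q g.
have Mh : M h by apply: M_iter.
have hp x : iter p h x = x.
  rewrite /h -iterM mulnC /q divnK ?Hk1' //; exact: pdiv_dvd.
have [x0 nx0] : exists x0, h x0 <> x0.
  apply: NNPP => Hn.
  have Pq : P q.
    rewrite /P divn_gt0 ?pdiv_gt0 ?pdiv_leq //=.
    by apply/forallP => x; apply/eqP; apply: NNPP => Hx; apply: Hn; exists x.
  have := Hmin q Pq; rewrite leqNgt; move/negP; apply.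
  by apply: ltn_Pdiv; [apply: prime_gt1|].
have Th : ~ Tset h.
  case => [E|[d E]].
    by apply: nx0; rewrite E.
  apply: nx0.
  rewrite -[RHS](hp x0) -(prednK (prime_gt0 pp)) iterS.
  by rewrite E.
case: (classic (exists x y, x <> y /\ h x = x /\ h y = y)) => [H1|N1].
  exists h; split => //; split => //; right; right; exists p; split => //; split.
    by apply: functional_extensionality.
  by left.
case: (classic (exists x y, on_cycle h p x /\ on_cycle h p y /\ forall k, iter k h x <> y)) => [H2|N2].
  exists h; split => //; split => //; right; right; exists p; split => //; split.
    by apply: functional_extensionality.
  by right.
exact: (cyc_case HM HC Md hA Mh pp hp nx0 N1 N2).
Qed.

Lemma find_good g : M g -> ~ Tset g -> exists h, M h /\ ~ Tset h /\ good h.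
Proof.
move=> Mg Tg.
have [k [k0 Hk]] := idem_pow g.
case: (classic (Tset (iter k g))) => [[E|[a E]]|nT].
- apply: (perm_case Mg Tg); exists k; split => // x; by rewrite E.
- apply: (nil_case HM HC Md hA Mg Tg); exists k, a => x; by rewrite E.
- exists (iter k g); split; first exact: M_iter.
  split => //; left; apply: functional_extensionality => x /=; exact: Hk.
Qed.

End Find.

Section Main.
Variable A : finType.

Lemma diag_good (f : A -> A) : ~ Tset f -> good f -> diagP (Mf f).
Proof.
move=> Tf [HI|[HII|[p [pp [E [[x [y [nxy [fx fy]]]]|[x [y [cx [cy nr]]]]]]]]]].
- exact: diagI.
- exact: diagII.
- have hp z : iter p f z = z by rewrite E.
  exact: (diagIIIfix pp hp nxy fx fy).
- have hp z : iter p f z = z by rewrite E.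
  have p1 := prime_gt1 pp.
  have nx : f x <> x by apply: (proj2 cx 1).
  have ny : f y <> y by apply: (proj2 cy 1).
  apply: (diagIIIcyc pp hp nx ny).
  by move=> [k Hk]; apply: (nr k).
Qed.

Lemma Mf_uclosed (f : A -> A) : ~ Tset f -> good f -> u_closed (Mf f).
Proof.
move=> Tf Gf; have [a [_ _]] := nonT_two Tf.
apply: (u_closed_of_diag a) => //; [exact: Mf_monoid|exact: Mf_Cst|exact: diag_good].
Qed.

Lemma N_iter (N : mset A) h k : monoid N -> N h -> N (iter k h).
Proof. move=> HN Nh; exact: (M_iter HN Nh). Qed.

Lemma gen (f : A -> A) (N : mset A) g : ~ Tset f -> good f -> monoid N -> subm (@Cst A) N ->
  N g -> Mf f g -> ~ Tset g -> subm (Mf f) N.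
Proof.
move=> Tf Gf HN HC Ng [[k Ek]|Cg] Tg; last by exfalso; apply: Tg; right.
have Nf : N f.
  case: Gf => [HI|[[[c Hc] _]|[p [pp [E _]]]]].
  - case: k Ek => [|k] Ek; first by exfalso; apply: Tg; left; rewrite Ek.
    have Hff x : f (f x) = f x := congr1 (fun g => g x) HI.
    have Hit n x : iter n.+1 f x = f x.
      by elim: n => [|n IH] //; rewrite iterS IH Hff.
    have -> : f = iter k.+1 f by apply: functional_extensionality => x; rewrite Hit.
    by rewrite -Ek.
  - case: k Ek => [|[|k]] Ek; first by exfalso; apply: Tg; left; rewrite Ek.
      by rewrite Ek in Ng.
    have Hffc x : f (f x) = c := congr1 (fun g => g x) Hc.
    have fc := fcc Hffc.
    have Hit n x : iter n.+2 f x = c.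
      by elim: n => [|n IH]; [exact: Hffc|rewrite iterS IH fc].
    exfalso; apply: Tg; right; exists c; rewrite Ek.
    by apply: functional_extensionality => x; apply: Hit.
  - have hp z : iter p f z = z by rewrite E.
    case: (boolP (p %| k)) => Hpk.
      exfalso; apply: Tg; left; rewrite Ek; apply: functional_extensionality => x.
      by move: Hpk => /dvdnP [q ->]; rewrite iter_mulp'.
    have k0 : 0 < k by case: k {Ek} Hpk => //; rewrite dvdn0.
    have cop : coprime k p by rewrite coprime_sym prime_coprime.
    have [[u v] /= Huv] := (coprimeP _ k0 cop).
    have Hle : v * p <= u * k.
      have : 0 < u * k - v * p by rewrite Huv.
      by rewrite subn_gt0 => /ltnW.
    have Euv : u * k = 1 + v * p by rewrite -(subnK Hle) Huv.
    have -> : f = iter u g.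
      apply: functional_extensionality => x.
      by rewrite Ek -iterM Euv iterD iter_mulp'.
    exact: N_iter.
move=> h [[l ->]|[a ->]]; first exact: N_iter.
by apply: HC; exists a.
Qed.

End Main.

Lemma Tset_Mf (A : finType) (f : A -> A) : subm (@Tset A) (Mf f).
Proof. move=> g [->|Cg]; [by left; exists 0|by right]. Qed.

Lemma main2 (A : finType) (hA : 3 <= #|A|) (M : mset A) : minimal_u_closed M ->
  exists f, ~ Tset f /\ good f /\ eqm M (Mf f).
Proof.
move=> [HM [Hu [[HTM [g [Mg Tg]]] Hmin]]].
have HC := uclosed_Cst Hu.
have [a0 _] := nonT_two Tg.
have Md := uclosed_diag a0 Hu.
have [h [Mh [Th Gh]]] := find_good HM HC Md hA Mg Tg.
exists h; split => //; split => //.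
have sub : subm (Mf h) M.
  move=> f [[k ->]|Cf]; [exact: M_iter|exact: HC].
case: (classic (subm M (Mf h))) => [H|H].
  by move=> f; split; [apply: H|apply: sub].
exfalso.
have [f Hf] : exists f, M f /\ ~ Mf h f.
  apply: NNPP => Hn; apply: H => f Mf'; apply: NNPP => nf; apply: Hn; by exists f.
have := Hmin (Mf h) (Mf_monoid h) (Mf_uclosed Th Gh) (conj sub (ex_intro _ f Hf)).
move=> /(_ h) [H1 _]; apply: Th; apply: H1; by left; exists 1.
Qed.

Theorem theorem5p3 (A : finType) (hA : 3 <= #|A|) :
  (forall M : mset A,
     minimal_u_closed M <->
     exists f : A -> A, ~ Tset f /\
       (cond_I f \/ cond_II' f \/ cond_III' f) /\ eqm M (Mf f)) /\
  (forall M : mset A, minimal_u_closed M -> C_minimal M).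
Proof.
split; last first.
  move=> M HMin; have [f [Tf [Gf E]]] := main2 hA HMin.
  move: HMin => [HM [Hu [HTM Hmin]]].
  split => //; split => //.
  move=> [N [HN [[HTN [g [Ng Tg]]] [HNM [h [Mh Nh]]]]]].
  apply: Nh.
  have HCN : subm (@Cst A) N by move=> x Cx; apply: HTN; right.
  have Mg : Mf f g by apply/(E _); apply: HNM.
  by apply: (gen Tf Gf HN HCN Ng Mg Tg); apply/(E _).
move=> M; split; first exact: main2.
move=> [f [Tf [Gf E]]].
have HMf := Mf_monoid f.
have HM : monoid M.
  split; first by apply/(E _); case: HMf.
  by move=> g h /(E _) Mg /(E _) Mh; apply/(E _); case: HMf => _; apply.
have Hu : u_closed M.
  move=> g; split => Hg.
    apply/(E _); apply/(Mf_uclosed Tf Gf) => N HN HMN Hcl.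
    apply: Hg => // x Mx; apply: HMN; by apply/(E _).
  move=> N HN HMN Hcl; exact: HMN.
split => //; split => //; split.
  split; first by move=> g Tg; apply/(E _); apply: Tset_Mf.
  by exists f; split => //; apply/(E _); left; exists 1.
move=> N HN HuN [HNM [h [Mh Nh]]] g; split => [Ng|Tg]; last first.
  case: Tg => [->|Cg]; first by case: HN.
  exact: (uclosed_Cst HuN).
apply: NNPP => Tg; apply: Nh.
have HCN := uclosed_Cst HuN.
have Mg : Mf f g by apply/(E _); apply: HNM.
by apply: (gen Tf Gf HN HCN Ng Mg Tg); apply/(E _).
Qed.
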